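(* Let $q\neq-1$ be real and let $0\le j\le n$ be integers. Then $$\sum_{k=0}^{\lfloor n/2\rfloor}q^{\binom{n-2k}{2}}\begin{bmatrix} n\\ 2k\end{bmatrix}_q\begin{bmatrix} k\\ j\end{bmatrix}_{q^2}=\frac{(1+q)\cdots(1+q^{n-1})}{(1+q)\cdots(1+q^{j})\cdot(1+q^{n-j})\cdots(1+q^{n-1})}\,\frac{[n]_q}{[n-j]_q}\begin{bmatrix} n-j\\ j\end{bmatrix}_q$$ and $$\sum_{k=0}^{\lfloor n/2\rfloor}q^{\binom{n-2k}{2}}\begin{bmatrix} n+1\\ 2k+1\end{bmatrix}_q\begin{bmatrix} k\\ j\end{bmatrix}_{q^2}=(1+q^{j+1})\cdots(1+q^{n-j})\begin{bmatrix} n-j\\ j\end{bmatrix}_q.$$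
   Context: For a parameter $p$: $[m]_p=1+p+\cdots+p^{m-1}$, $[m]_p!=[1]_p\cdots[m]_p$, $\begin{bmatrix} m\\ i\end{bmatrix}_p=\frac{[m]_p!}{[i]_p![m-i]_p!}$ for $0\le i\le m$ and $0$ otherwise (in particular for $m<0$ or $i>m$). Empty products equal $1$; $\binom{0}{2}=\binom{1}{2}=0$. When $n=j=0$ the factor $\frac{[n]_q}{[n-j]_q}$ is read as $1$. *)

(* Defs.v *)
From mathcomp Require Import all_boot all_order all_algebra.
Set Implicit Arguments. Unset Strict Implicit. Unset Printing Implicit Defensive.
Import Order.TTheory GRing.Theory Num.Theory.
Local Open Scope ring_scope.

Definition qint {R : ringType} (p : R) (m : nat) : R := \sum_(i < m) p ^+ i.
Definition qfact {R : ringType} (p : R) (m : nat) : R := \prod_(i < m) qint p i.+1.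
Definition qbinom {R : fieldType} (p : R) (m i : nat) : R :=
  if (i <= m)%N then qfact p m / (qfact p i * qfact p (m - i)) else 0.
(* The factor [n]_q/[n-j]_q, read as 1 when n = j (the paper: n=j=0 gives 1;
   for n=j>0 it multiplies a vanishing Gaussian binomial). *)
Definition qratio {R : fieldType} (q : R) (n j : nat) : R :=
  if (n - j == 0)%N then 1 else qint q n / qint q (n - j).

(* Main.v *)
Require Import Defs.
From mathcomp Require Import all_boot all_order all_algebra.
From mathcomp Require Import ring zify.
Import Order.TTheory GRing.Theory Num.Theory.
Local Open Scope ring_scope.

Lemma qint0 (R : ringType) (p : R) : qint p 0 = 0.
Proof. by rewrite /qint big_ord0. Qed.

Lemma qintS (R : ringType) (p : R) m : qint p m.+1 = qint p m + p ^+ m.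
Proof. by rewrite /qint big_ord_recr. Qed.

Lemma qint1 (R : ringType) (p : R) : qint p 1 = 1.
Proof. by rewrite qintS qint0 add0r expr0. Qed.

Lemma qintD (R : comRingType) (p : R) a b :
  qint p (a + b) = qint p a + p ^+ a * qint p b.
Proof.
elim: b => [|b IH]; first by rewrite addn0 qint0 mulr0 addr0.
by rewrite addnS !qintS IH exprD; ring.
Qed.

Lemma qpowE (R : comRingType) (p : R) a : p ^+ a = 1 + (p - 1) * qint p a.
Proof.
elim: a => [|a IH]; first by rewrite qint0 expr0; ring.
by rewrite qintS exprS mulrDr IH; ring.
Qed.

Lemma qint2 (R : comRingType) (p : R) a : qint p (2 * a) = qint p a * (1 + p ^+ a).
Proof. by rewrite mul2n -addnn qintD; ring. Qed.

Lemma qfact0 (R : ringType) (p : R) : qfact p 0 = 1.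
Proof. by rewrite /qfact big_ord0. Qed.

Lemma qfactS (R : ringType) (p : R) m : qfact p m.+1 = qfact p m * qint p m.+1.
Proof. by rewrite /qfact big_ord_recr. Qed.

Lemma qint_neq0 (R : realFieldType) (q : R) m : q != -1 -> (0 < m)%N -> qint q m != 0.
Proof.
move=> hq hm; apply/eqP => h0.
have h1 : q ^+ m = 1 by rewrite qpowE h0 mulr0 addr0.
have [qge0|qlt0] := lerP 0 q.
  have /eqP q1 : q == 1 by rewrite -(pexpr_eq1 hm qge0) h1.
  move: h0; rewrite q1 /qint.
  under eq_bigr do rewrite expr1n.
  rewrite sumr_const card_ord => /eqP; rewrite pnatr_eq0 => /eqP m0.
  by rewrite m0 in hm.
have : `|q| ^+ m == 1 by rewrite -normrX h1 normr1.
rewrite (pexpr_eq1 hm (normr_ge0 q)) ltr0_norm // => /eqP h.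
by move: hq; rewrite -h opprK eqxx.
Qed.

Lemma sq_neqm1 (R : realFieldType) (q : R) : q ^+ 2 != -1.
Proof.
apply/eqP => h; have := sqr_ge0 q; rewrite h.
by rewrite oppr_ge0 leNgt ltr01.
Qed.

Lemma qfact_neq0 (R : realFieldType) (q : R) m : q != -1 -> qfact q m != 0.
Proof.
move=> hq; elim: m => [|m IH]; first by rewrite qfact0 oner_neq0.
by rewrite qfactS mulf_neq0 // qint_neq0.
Qed.

Lemma onepX_neq0 (R : realFieldType) (q : R) i : q != -1 -> 1 + q ^+ i != 0.
Proof.
move=> hq; case: i => [|i].
  by rewrite expr0 (_ : 1 + 1 = 2%:R) // pnatr_eq0.
apply/eqP => h; have := @qint_neq0 R q (2 * i.+1)%N hq.
by rewrite qint2 h mulr0 eqxx => /(_ isT).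
Qed.

Lemma P_neq0 (R : realFieldType) (q : R) a b : q != -1 ->
  \prod_(a <= i < b) (1 + q ^+ i) != 0.
Proof.
move=> hq; rewrite prodf_seq_neq0; apply/allP => i _ /=; exact: onepX_neq0.
Qed.
Arguments qint0 {R} p. Arguments qintS {R} p m. Arguments qint1 {R} p.
Arguments qintD {R} p a b. Arguments qpowE {R} p a. Arguments qint2 {R} p a.
Arguments qfact0 {R} p. Arguments qfactS {R} p m.
Arguments qint_neq0 {R} q m. Arguments qfact_neq0 {R} q m.
Arguments onepX_neq0 {R} q i. Arguments P_neq0 {R} q a b.


Lemma qbinom_small (R : fieldType) (p : R) m i : (m < i)%N -> qbinom p m i = 0.
Proof. by move=> h; rewrite /qbinom leqNgt h. Qed.

Lemma qbinom0 (R : realFieldType) (p : R) m : p != -1 -> qbinom p m 0 = 1.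
Proof.
move=> hp; rewrite /qbinom leq0n qfact0 mul1r subn0 divff //; exact: qfact_neq0.
Qed.

Lemma qbinomm (R : realFieldType) (p : R) m : p != -1 -> qbinom p m m = 1.
Proof.
move=> hp; rewrite /qbinom leqnn subnn qfact0 mulr1 divff //; exact: qfact_neq0.
Qed.

Lemma qbinom_pascal (R : realFieldType) (p : R) m i : p != -1 ->
  qbinom p m.+1 i.+1 = qbinom p m i + p ^+ i.+1 * qbinom p m i.+1.
Proof.
move=> hp; case: (ltngtP i m) => him.
- have [d ->] : exists d, m = (i.+1 + d)%N by exists (m - i.+1)%N; rewrite subnKC.
  have e1 : ((i.+1 + d).+1 - i.+1 = d.+1)%N by lia.
  have e2 : ((i.+1 + d) - i = d.+1)%N by lia.
  have e3 : ((i.+1 + d) - i.+1 = d)%N by lia.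
  rewrite /qbinom e1 e2 e3 ifT ?ifT ?ifT; try lia.
  rewrite !qfactS.
  have := qintD p i.+1 d.+1; rewrite addnS => ->.
  have h1 := qfact_neq0 p (i.+1 + d) hp; have h2 := qfact_neq0 p i hp.
  have h3 := qfact_neq0 p d hp.
  have h4 := qint_neq0 p i.+1 hp isT; have h5 := qint_neq0 p d.+1 hp isT.
  field.
  by rewrite h2 h3 h4 h5.
- rewrite !qbinom_small ?ltnS //; [ring | exact: ltnW].
- by subst i; rewrite !qbinomm // qbinom_small // mulr0 addr0.
Qed.
Arguments qbinom_small {R} p m i. Arguments qbinom0 {R} p m. Arguments qbinomm {R} p m.
Arguments qbinom_pascal {R} p m i.


Lemma qbinom_succ_top (R : realFieldType) (p : R) j m : p != -1 ->
  qbinom p (j + m).+1 j = qbinom p (j + m) j * qint p (j + m).+1 / qint p m.+1.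
Proof.
move=> hp.
have e1 : ((j + m).+1 - j = m.+1)%N by lia.
have e2 : ((j + m) - j = m)%N by lia.
rewrite /qbinom e1 e2 ifT ?ifT; try lia.
rewrite !qfactS.
have h2 := qfact_neq0 p j hp. have h3 := qfact_neq0 p m hp.
have h5 := qint_neq0 p m.+1 hp isT.
by field; rewrite h2 h3 h5.
Qed.

Definition T (R : realFieldType) (q : R) j m :=
  (\prod_(i < m) qint q (2 * (j + i.+1))) / qfact q m.
Arguments T {R} q j m.

Lemma T0 (R : realFieldType) (q : R) j : T q j 0 = 1.
Proof. by rewrite /T big_ord0 qfact0 divr1. Qed.

Lemma TS (R : realFieldType) (q : R) j m :
  T q j m.+1 = T q j m * qint q (2 * (j + m.+1)) / qint q m.+1.
Proof. by rewrite /T big_ord_recr qfactS invfM /=; ring. Qed.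

Lemma Tdown (R : realFieldType) (q : R) j m :
  T q j m.+1 = T q j.+1 m * qint q (2 * j.+1) / qint q m.+1.
Proof.
rewrite /T big_ord_recl qfactS invfM /= addn1.
rewrite (eq_bigr (fun i : 'I_m => qint q (2 * (j.+1 + i.+1)))); last first.
  by move=> i _; rewrite /bump leq0n add1n addSnnS.
ring.
Qed.

Lemma T_P (R : realFieldType) (q : R) j m : q != -1 ->
  T q j m = (\prod_(j.+1 <= i < (j + m).+1) (1 + q ^+ i)) * qbinom q (j + m) j.
Proof.
move=> hq; elim: m => [|m IH].
  by rewrite T0 addn0 big_geq // qbinomm // mulr1.
rewrite TS IH addnS [in RHS]big_nat_recr /=; last lia.
rewrite qbinom_succ_top // -addnS qint2 addnS.
ring.
Qed.

Definition F2 (R : realFieldType) (q : R) n j :=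
  if (2 * j <= n)%N then T q j (n - 2 * j) else 0.
Arguments F2 {R} q n j.

Lemma F2E (R : realFieldType) (q : R) j m : F2 q (2 * j + m) j = T q j m.
Proof. by rewrite /F2 leq_addr addKn. Qed.

Lemma F2lt (R : realFieldType) (q : R) n j : (n < 2 * j)%N -> F2 q n j = 0.
Proof. by move=> h; rewrite /F2 leqNgt h. Qed.
Arguments qbinom_succ_top {R} p j m. Arguments T0 {R} q j. Arguments TS {R} q j m.
Arguments Tdown {R} q j m. Arguments T_P {R} q j m. Arguments F2E {R} q j m.
Arguments F2lt {R} q n j.


Lemma scal (R : realFieldType) (q : R) j m : q != -1 ->
  let a := qint q (2 * (j + m.+1)) in let b := qint q (2 * (j + m.+2)) in
  let c1 := qint q m.+1 in let c2 := qint q m.+2 in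
  let d := qint q (2 * j) in
  q ^+ (2 * j + m).+1 * (a / c1 - q ^+ (2 * j + m).+1) + a / c1 * d / c2
    + q ^+ (2 * j)
  = a / c1 * b / c2 - q ^+ (2 * j + m).+2 * (a / c1).
Proof.
move=> hq a b c1 c2 d.
have hc1 : c1 != 0 by apply: qint_neq0.
have hc2 : c2 != 0 by apply: qint_neq0.
have pj : forall k, q ^+ (2 * k) = (q ^+ k) ^+ 2 by move=> k; rewrite mulnC exprM.
have q2 : qint q 2 = 1 + q by rewrite qintS qint1 expr1.
have ed : d = qint q j * (1 + q ^+ j) by rewrite /d qint2.
have ea : a = qint q j * (1 + q ^+ j) + (q ^+ j) ^+ 2 *
     (qint q m * (1 + q ^+ m) + (q ^+ m) ^+ 2 * (1 + q)).
  rewrite /a (_ : (2 * (j + m.+1) = 2 * j + (2 * m + 2))%N); last lia.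
  by rewrite (qintD q (2 * j)) (qintD q (2 * m)) !qint2 !pj q2.
have eb : b = a + (q ^+ j) ^+ 2 * (q ^+ m) ^+ 2 * q ^+ 2 * (1 + q).
  rewrite /b (_ : (2 * (j + m.+2) = 2 * (j + m.+1) + 2)%N); last lia.
  rewrite qintD q2 -/a.
  rewrite (_ : (2 * (j + m.+1) = 2 * j + 2 * m + 2)%N); last lia.
  by rewrite (exprD q (2 * j + 2 * m) 2) (exprD q (2 * j) (2 * m)) !pj.
have ec1 : c1 = qint q m + q ^+ m by rewrite /c1 qintS.
have ec2 : c2 = qint q m + q ^+ m + q ^+ m * q by rewrite /c2 !qintS exprS; ring.
have e1 : q ^+ (2 * j + m).+1 = (q ^+ j) ^+ 2 * q ^+ m * q.
  by rewrite exprS exprD pj; ring.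
have e2 : q ^+ (2 * j + m).+2 = (q ^+ j) ^+ 2 * q ^+ m * q ^+ 2.
  by rewrite !exprS exprD pj; ring.
rewrite e1 e2 pj eb ea ed.
rewrite ec1 in hc1 *; rewrite ec2 in hc2 *.
rewrite (qpowE q j) (qpowE q m).
rewrite (qpowE q m) in hc1 hc2.
field.
by rewrite hc1 hc2.
Qed.
Arguments scal {R} q j m.


Lemma F2E' (R : realFieldType) (q : R) n j m : n = (2 * j + m)%N -> F2 q n j = T q j m.
Proof. by move=> ->; rewrite F2E. Qed.
Arguments F2E' {R} q n j m.

Lemma scal2 (R : realFieldType) (q : R) j m X : q != -1 ->
  q ^+ (2 * j + m).+1 * (X * qint q (2 * (j + m.+1)) / qint q m.+1
     - q ^+ (2 * j + m).+1 * X)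
  + X * qint q (2 * (j + m.+1)) / qint q m.+1 * qint q (2 * j) / qint q m.+2
  + q ^+ (2 * j) * X
  = X * qint q (2 * (j + m.+1)) / qint q m.+1 * qint q (2 * (j + m.+2)) / qint q m.+2
    - q ^+ (2 * j + m).+2 * (X * qint q (2 * (j + m.+1)) / qint q m.+1).
Proof.
move=> hq; have S := scal q j m hq; rewrite /= in S.
transitivity (X * (q ^+ (2 * j + m).+1 * (qint q (2 * (j + m.+1)) / qint q m.+1
     - q ^+ (2 * j + m).+1) + qint q (2 * (j + m.+1)) / qint q m.+1 * qint q (2 * j) / qint q m.+2
    + q ^+ (2 * j))); first ring.
rewrite S; ring.
Qed.

Lemma K (R : realFieldType) (q : R) n j : q != -1 ->
  q ^+ n.+1 * (F2 q n.+1 j - q ^+ n.+1 * F2 q n j)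
  + (if j is j'.+1 then F2 q n j' else 0) + q ^+ (2 * j) * F2 q n j
  = F2 q n.+2 j - q ^+ n.+2 * F2 q n.+1 j.
Proof.
move=> hq.
case: (ltnP n.+2 (2 * j)) => h1.
  rewrite !F2lt; try lia.
  case: j h1 => [|j'] h1 /=; last rewrite F2lt; try lia.
  ring.
case: (ltnP n (2 * j)) => h2.
  case: j h1 h2 => [|j'] h1 h2; first lia.
  case: (ltnP n.+1 (2 * j'.+1)) => h3.
    (* n.+2 = 2 j *)
    rewrite (F2lt q n.+1) // (F2lt q n) // (F2E' q n.+2 j'.+1 0); last lia.
    rewrite (F2E' q n j' 0); last lia.
    rewrite !T0; ring.
  (* n.+2 = 2j + 1 *)
  rewrite (F2lt q n) // (F2E' q n.+2 j'.+1 1); last lia.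
  rewrite (F2E' q n.+1 j'.+1 0); last lia.
  rewrite (F2E' q n j' 1); last lia.
  rewrite !TS !T0 !qint1 !divr1 !mul1r.
  have e : n = (2 * j' + 1)%N by lia.
  subst n.
  rewrite (_ : (2 * (j'.+1 + 1) = 2 * (j' + 1) + 2)%N); last lia.
  rewrite (qintD q (2 * (j' + 1)) 2) (_ : qint q 2 = 1 + q); last by rewrite qintS qint1 expr1.
  rewrite (_ : (2 * j'.+1 = 2 * (j' + 1))%N); last lia.
  rewrite (_ : ((2 * j' + 1).+2 = (2 * (j' + 1)).+1)%N); last lia.
  rewrite (_ : ((2 * j' + 1).+1 = (2 * (j' + 1)))%N); last lia.
  rewrite exprS; ring.
have [m em] : exists m, n = (2 * j + m)%N by exists (n - 2 * j)%N; lia.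
subst n.
have f1 : F2 q (2 * j + m).+1 j = T q j m.+1 by rewrite -addnS F2E.
have f2 : F2 q (2 * j + m).+2 j = T q j m.+2 by rewrite -!addnS F2E.
have Jt : (if j is j'.+1 then F2 q (2 * j + m) j' else 0)
  = T q j m * qint q (2 * (j + m.+1)) / qint q m.+1 * qint q (2 * j) / qint q m.+2.
  case: j {h1 h2 f1 f2} => [|j'].
    by rewrite muln0 qint0 mulr0 mul0r.
  rewrite (F2E' q _ j' m.+2); last lia.
  rewrite Tdown TS; ring.
rewrite f1 f2 Jt F2E (TS q j m.+1) (TS q j m).
exact: scal2.
Qed.


Lemma sum_ext (R : ringType) (f : nat -> R) M N : (M <= N)%N ->
  (forall k, (M <= k)%N -> f k = 0) -> \sum_(k < N) f k = \sum_(k < M) f k.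
Proof.
move=> hMN hf; elim: N hMN => [|N IH] hMN.
  by move: hMN; rewrite leqn0 => /eqP ->.
case: (ltngtP M N.+1) => h; last by rewrite h.
- by rewrite big_ord_recr /= IH // hf // addr0.
- lia.
Qed.

Definition cc (R : realFieldType) (q : R) j k := qbinom (q ^+ 2) k j.
Arguments cc {R} q j k.
Definition ee (R : realFieldType) (q : R) n k := q ^+ 'C(n - 2 * k, 2) * qbinom q n (2 * k).
Arguments ee {R} q n k.
Definition oo (R : realFieldType) (q : R) n k :=
  q ^+ 'C(n - (2 * k).+1, 2) * qbinom q n (2 * k).+1.
Arguments oo {R} q n k.
Definition EE (R : realFieldType) (q : R) j n := \sum_(k < n.+1) ee q n k * cc q j k.
Arguments EE {R} q j n.
Definition OO (R : realFieldType) (q : R) j n := \sum_(k < n.+1) oo q n k * cc q j k.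
Arguments OO {R} q j n.

Lemma bin2S a : 'C(a.+1, 2) = ('C(a, 2) + a)%N.
Proof. by rewrite binS bin1. Qed.

Lemma oo_rec (R : realFieldType) (q : R) n k : q != -1 ->
  oo q n.+1 k = ee q n k + q ^+ n * oo q n k.
Proof.
move=> hq; rewrite /oo /ee qbinom_pascal // subSS.
case: (ltnP n (2 * k).+1) => h.
  by rewrite (qbinom_small q n (2 * k).+1) // !mulr0 !addr0.
have e : ('C(n - 2 * k, 2) + (2 * k).+1 = n + 'C(n - (2 * k).+1, 2))%N.
  have -> : (n - 2 * k = (n - (2 * k).+1).+1)%N by lia.
  rewrite bin2S; lia.
rewrite mulrDr mulrA -exprD e exprD; ring.
Qed.

Lemma ee_rec0 (R : realFieldType) (q : R) n : q != -1 ->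
  ee q n.+1 0 = q ^+ n * ee q n 0.
Proof.
move=> hq; rewrite /ee muln0 !subn0 !qbinom0 // bin2S exprD; ring.
Qed.

Lemma ee_recS (R : realFieldType) (q : R) n k : q != -1 ->
  ee q n.+1 k.+1 = oo q n k + q ^+ n * ee q n k.+1.
Proof.
move=> hq; rewrite /oo /ee (_ : (2 * k.+1 = (2 * k).+2)%N); last lia.
rewrite qbinom_pascal // subSS.
case: (ltnP n (2 * k).+2) => h.
  by rewrite (qbinom_small q n (2 * k).+2) // !mulr0 !addr0.
have e : ('C(n - (2 * k).+1, 2) + (2 * k).+2 = n + 'C(n - (2 * k).+2, 2))%N.
  have -> : (n - (2 * k).+1 = (n - (2 * k).+2).+1)%N by lia.
  rewrite bin2S; lia.
rewrite mulrDr mulrA -exprD e exprD; ring.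
Qed.

Lemma ee_zero (R : realFieldType) (q : R) n k : (n.+1 <= k)%N -> ee q n k = 0.
Proof. by move=> h; rewrite /ee qbinom_small ?mulr0 //; lia. Qed.
Lemma oo_zero (R : realFieldType) (q : R) n k : (n.+1 <= k)%N -> oo q n k = 0.
Proof. by move=> h; rewrite /oo qbinom_small ?mulr0 //; lia. Qed.

Lemma OO_rec (R : realFieldType) (q : R) j n : q != -1 ->
  OO q j n.+1 = EE q j n + q ^+ n * OO q j n.
Proof.
move=> hq; rewrite /OO /EE.
rewrite (eq_bigr (fun k : 'I_ _ => ee q n k * cc q j k + q ^+ n * (oo q n k * cc q j k)));
  last by move=> k _; rewrite oo_rec //; ring.
rewrite big_split /= -mulr_sumr.
rewrite (@sum_ext _ (fun k => ee q n k * cc q j k) n.+1 n.+2) //; last first.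
  by move=> k hk; rewrite ee_zero ?mul0r.
rewrite (@sum_ext _ (fun k => oo q n k * cc q j k) n.+1 n.+2) //.
by move=> k hk; rewrite oo_zero ?mul0r.
Qed.

Lemma EE_rec (R : realFieldType) (q : R) j n : q != -1 ->
  EE q j n.+1 = q ^+ n * EE q j n + (if j is j'.+1 then OO q j' n else 0)
     + q ^+ (2 * j) * OO q j n.
Proof.
move=> hq.
have hE : EE q j n = ee q n 0 * cc q j 0 + \sum_(k < n.+1) ee q n k.+1 * cc q j k.+1.
  rewrite /EE -(@sum_ext _ (fun k => ee q n k * cc q j k) n.+1 n.+2) //; last first.
    by move=> k hk; rewrite ee_zero ?mul0r.
  rewrite big_ord_recl /=; congr (_ + _); apply: eq_bigr => k _; by rewrite lift0.
have hc : forall k, cc q j k.+1 =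
    (if j is j'.+1 then cc q j' k else 0) + q ^+ (2 * j) * cc q j k.
  move=> k; rewrite /cc; case: j {hE} => [|j'].
    by rewrite !qbinom0 ?sq_neqm1 // muln0 expr0 add0r mul1r.
  by rewrite qbinom_pascal ?sq_neqm1 // exprM.
have hs : \sum_(k < n.+1) (if j is j'.+1 then oo q n k * cc q j' k else 0)
        = (if j is j'.+1 then OO q j' n else 0).
  by case: j {hc hE} => [|j'] //; rewrite big1.
rewrite [in LHS]/EE [in LHS]big_ord_recl /=.
rewrite [in LHS](eq_bigr (fun k : 'I_ _ => q ^+ n * (ee q n k.+1 * cc q j k.+1)
   + ((if j is j'.+1 then oo q n k * cc q j' k else 0) + q ^+ (2 * j) * (oo q n k * cc q j k))));
  last first.
  move=> k _; rewrite /bump leq0n add1n ee_recS // hc.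
  by case: j {hc hE hs} => [|j']; ring.
rewrite big_split /= big_split /= -!mulr_sumr hs hE ee_rec0 //.
rewrite /OO; case: j {hc hE hs} => [|j']; ring.
Qed.

Definition G (R : realFieldType) (q : R) n j := if n is n'.+1 then F2 q n' j else 0.
Arguments G {R} q n j.

Lemma main (R : realFieldType) (q : R) n j : q != -1 ->
  EE q j n = F2 q n j - q ^+ n * G q n j /\ OO q j n = G q n j.
Proof.
move=> hq; elim: n j => [|n IH] j.
  rewrite /EE /OO !big_ord1 /ee /oo /cc /= (qbinom_small q 0 1) //.
  rewrite qbinom0 // mulr0 mul0r; split=> //.
  case: j => [|j].
    by rewrite qbinom0 ?sq_neqm1 // (F2E' q 0 0 0) // T0; ring.
  by rewrite qbinom_small // F2lt //; ring.
have [IHE IHO] := IH j.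
split; last by rewrite OO_rec // IHE IHO /=; ring.
rewrite EE_rec // IHE IHO.
have Hs : (if j is j'.+1 then OO q j' n else 0) = (if j is j'.+1 then G q n j' else 0).
  by case: j {IHE IHO} => [|j'] //; case: (IH j').
rewrite Hs; case: n {IH IHE IHO Hs} => [|n].
  case: j => [|j] /=.
    rewrite (F2E' q 0 0 0) // (F2E' q 1 0 1) // TS !T0 qint1 divr1.
    rewrite (_ : qint q (2 * (0 + 1)) = 1 + q); last by rewrite qintS qint1 expr1.
    ring.
  by rewrite !F2lt; try lia; ring.
rewrite /= -K //.
Qed.
Arguments main {R} q n j.


Lemma rhs2 (R : realFieldType) (q : R) n j : q != -1 ->
  F2 q n j = (\prod_(j.+1 <= i < (n - j).+1) (1 + q ^+ i)) * qbinom q (n - j) j.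
Proof.
move=> hq; case: (ltnP n (2 * j)) => h.
  by rewrite F2lt // qbinom_small ?mulr0 //; lia.
have [m ->] : exists m, n = (2 * j + m)%N by exists (n - 2 * j)%N; lia.
by rewrite F2E T_P // (_ : (2 * j + m - j = j + m)%N); last lia.
Qed.

Lemma rhs1 (R : realFieldType) (q : R) n j : q != -1 -> (j <= n)%N ->
  F2 q n j - q ^+ n * G q n j =
  (\prod_(1 <= i < n) (1 + q ^+ i))
     / ((\prod_(1 <= i < j.+1) (1 + q ^+ i)) * (\prod_(n - j <= i < n) (1 + q ^+ i)))
     * qratio q n j * qbinom q (n - j) j.
Proof.
move=> hq; case: n => [|n] hj.
  move: hj; rewrite leqn0 => /eqP ->.
  rewrite (F2E' q 0 0 0) // T0 /= !big_geq // /qratio /= qbinomm //.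
  by rewrite mulr0 subr0 !mulr1 divr1.
rewrite /G.
case: (ltnP n.+1 (2 * j)) => h1.
  by rewrite !F2lt ?(qbinom_small q (n.+1 - j) j) ?mulr0 ?subr0 //; lia.
case: (ltnP n (2 * j)) => h2.
  have hn : n.+1 = (2 * j)%N by lia.
  have hj0 : (0 < j)%N by lia.
  rewrite (F2lt q n j) // (F2E' q n.+1 j 0); last lia.
  rewrite T0 mulr0 subr0 /qratio hn.
  have -> : (2 * j - j = j)%N by lia.
  rewrite ifF; last by apply/eqP; lia.
  rewrite qbinomm // mulr1.
  rewrite (@big_cat_nat _ _ _ j 1 (2 * j)) /=; try lia.
  rewrite (@big_nat_recr _ _ _ j 1) /=; last lia.
  rewrite qint2.
  have h3 := P_neq0 q 1 j hq. have h4 := P_neq0 q j (2 * j) hq.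
  have h5 := onepX_neq0 q j hq. have h6 := qint_neq0 q j hq hj0.
  by field; rewrite h3 h4 h5 h6.
have [m em] : exists m, n = (2 * j + m)%N by exists (n - 2 * j)%N; lia.
subst n.
rewrite (F2E q j m) -addnS F2E addnS TS (T_P q j m) //.
rewrite /qratio ifF; last by apply/eqP; lia.
have -> : ((2 * j + m).+1 - j = (j + m).+1)%N by lia.
rewrite qbinom_succ_top //.
rewrite (@big_cat_nat _ _ _ j.+1 1 (2 * j + m).+1) /=; try lia.
rewrite (@big_cat_nat _ _ _ (j + m).+1 j.+1 (2 * j + m).+1) /=; try lia.
have ha : qint q (2 * (j + m.+1)) =
    qint q (2 * j + m).+1 + q ^+ (2 * j + m).+1 * qint q m.+1.
  by rewrite -qintD; congr qint; lia.
rewrite ha.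
have h3 := P_neq0 q 1 j.+1 hq. have h4 := P_neq0 q (j + m).+1 (2 * j + m).+1 hq.
have h5 := qint_neq0 q (j + m).+1 hq isT. have h6 := qint_neq0 q m.+1 hq isT.
by field; rewrite h3 h4 h5 h6.
Qed.

Theorem theorem2p8 (R : realFieldType) (q : R) (n j : nat) :
  q != -1 -> (j <= n)%N ->
  (\sum_(0 <= k < (n./2).+1)
      q ^+ 'C(n - 2 * k, 2) * qbinom q n (2 * k) * qbinom (q ^+ 2) k j
   = (\prod_(1 <= i < n) (1 + q ^+ i))
     / ((\prod_(1 <= i < j.+1) (1 + q ^+ i)) * (\prod_(n - j <= i < n) (1 + q ^+ i)))
     * qratio q n j * qbinom q (n - j) j)
  /\
  (\sum_(0 <= k < (n./2).+1)
      q ^+ 'C(n - 2 * k, 2) * qbinom q n.+1 (2 * k).+1 * qbinom (q ^+ 2) k j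
   = (\prod_(j.+1 <= i < (n - j).+1) (1 + q ^+ i)) * qbinom q (n - j) j).
Proof.
move=> hq hj.
have hh1 : (n < 2 * (n./2).+1)%N.
  by have := odd_double_half n; have := leq_b1 (odd n); rewrite -muln2; lia.
have hh2 : ((n./2).+1 <= n.+1)%N.
  by have := odd_double_half n; have := leq_b1 (odd n); rewrite -muln2; lia.
have [ME MO] := main q n j hq.
have [_ MO'] := main q n.+1 j hq.
split.
  rewrite big_mkord -rhs1 // -ME /EE.
  rewrite (@sum_ext _ (fun k => ee q n k * cc q j k) (n./2).+1 n.+1) //.
  by move=> k hk; rewrite /ee qbinom_small ?mulr0 ?mul0r //; lia.
rewrite big_mkord -rhs2 // -[F2 q n j]/(G q n.+1 j) -MO' /OO.
rewrite (@sum_ext _ (fun k => oo q n.+1 k * cc q j k) (n./2).+1 n.+2) //; last first.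
  by move=> k hk; rewrite /oo qbinom_small ?mulr0 ?mul0r //; lia.
lia.
Qed.
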